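(* Let $\Phi\subseteq\mathbb{R}$ be a feasible set, let $\omega$ be a random element (a random sample path) on a probability space, and let $J:\Phi\times\Omega\to\mathbb{R}$ be a performance function. Suppose that for every $\omega$ the function $u\mapsto J(u,\omega)$ has a minimizer $u^\omega=\arg\min_{u\in\Phi}J(u,\omega)$ (the $\omega$-solution, a real random variable) and is scalar unimodal in $u$, i.e. $J(u',\omega)\le J(u'',\omega)$ whenever $u''<u'<u^\omega$, and $J(u',\omega)\le J(u'',\omega)$ whenever $u^\omega<u'<u''$ ($u',u''\in\Phi$). Let $u^m\in\Phi$ be an $\omega$-median, i.e. $\Pr[u^\omega\le u^m]\ge 0.5$ and $\Pr[u^\omega\ge u^m]\ge 0.5$. Then $u^m$ is a champion solution, i.e. $\Pr[J(u^m,\omega)\le J(u,\omega)]\ge 0.5$ for every $u\in\Phi$.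
   Context: A champion solution of the stochastic problem $\min_{u\in\Phi}J(u,\omega)$ is a $u^c\in\Phi$ with $\Pr[J(u^c,\omega)\le J(u,\omega)]\ge 0.5$ for all $u\in\Phi$. The $\omega$-solution $u^\omega$ is the optimal solution of the deterministic problem $\min_{u\in\Phi}J(u,\omega)$ for a fixed sample path $\omega$; the $\omega$-median is a median of the distribution of $u^\omega$. All events considered are assumed measurable. *)

(* Defs.v *)
From mathcomp Require Import all_boot all_order all_algebra.
From mathcomp Require Import all_classical all_reals all_analysis.
Set Implicit Arguments. Unset Strict Implicit. Unset Printing Implicit Defensive.
Import Order.TTheory GRing.Theory Num.Theory.
Local Open Scope classical_set_scope.
Local Open Scope ring_scope.

Definition omega_solution {R : realType} {T : Type}
  (Phi : set R) (J : R -> T -> R) (uw : T -> R) : Prop :=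
  forall w, Phi (uw w) /\ (forall u, Phi u -> J (uw w) w <= J u w).

Definition scalar_unimodal {R : realType} {T : Type}
  (Phi : set R) (J : R -> T -> R) (uw : T -> R) : Prop :=
  forall w u' u'', Phi u' -> Phi u'' ->
    ((u'' < u' /\ u' < uw w) -> J u' w <= J u'' w) /\
    ((uw w < u' /\ u' < u'') -> J u' w <= J u'' w).

Definition omega_median {d : measure_display} {T : measurableType d}
  {R : realType} (P : probability T R) (uw : T -> R) (um : R) : Prop :=
  (P [set w | (uw w <= um)%R] >= (2^-1)%:E)%E /\
  (P [set w | (uw w >= um)%R] >= (2^-1)%:E)%E.

Definition champion {d : measure_display} {T : measurableType d}
  {R : realType} (P : probability T R) (Phi : set R) (J : R -> T -> R)
  (uc : R) : Prop :=
  Phi uc /\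
  forall u, Phi u -> (P [set w | (J uc w <= J u w)%R] >= (2^-1)%:E)%E.

(* Main.v *)
Require Import Defs.
From mathcomp Require Import all_boot all_order all_algebra.
From mathcomp Require Import all_classical all_reals all_analysis.
From mathcomp Require Import lra.
Import Order.TTheory GRing.Theory Num.Theory.
Local Open Scope classical_set_scope.
Local Open Scope ring_scope.

Theorem theorem1 (d : measure_display) (T : measurableType d) (R : realType)
  (P : probability T R) (Phi : set R) (J : R -> T -> R) (uw : T -> R)
  (um : R)
  (uw_meas : measurable_fun setT uw)
  (J_events_meas : forall u v, Phi u -> Phi v ->
     measurable [set w | J u w <= J v w])
  (Hsol : omega_solution Phi J uw)
  (Huni : scalar_unimodal Phi J uw)
  (Hum : Phi um)
  (Hmed : omega_median P uw um) :
  champion P Phi J um.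
Proof.
split => // u Hu.
have mle : measurable [set w | uw w <= um].
  have := uw_meas measurableT _ (measurable_itv `]-oo, um]%R).
  rewrite setTI; congr measurable; apply/seteqP; split => w /=;
    by rewrite in_itv /=.
have mge : measurable [set w | um <= uw w].
  have := uw_meas measurableT _ (measurable_itv `[um, +oo[%R).
  rewrite setTI; congr measurable; apply/seteqP; split => w /=;
    by rewrite in_itv /= andbT.
have mJ := J_events_meas _ _ Hum Hu.
case: (ltgtP u um) => [ltu|gtu|equ].
- apply: le_trans Hmed.2 _; apply: le_measure; rewrite ?inE //.
  move=> w /=; rewrite le_eqVlt => /orP [/eqP HH|lt].
    by rewrite HH; exact: (Hsol w).2.
  exact: ((Huni w um u Hum Hu).1 (conj ltu lt)).
- apply: le_trans Hmed.1 _; apply: le_measure; rewrite ?inE //.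
  move=> w /=; rewrite le_eqVlt => /orP [/eqP HH|lt].
    by rewrite -HH; exact: (Hsol w).2.
  exact: ((Huni w um u Hum Hu).2 (conj lt gtu)).
- subst u.
  have -> : [set w | J um w <= J um w] = setT.
    by apply/seteqP; split => w //= _.
  rewrite probability_setT lee_fin. lra.
Qed.
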